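(* Let $G$ be a graph with no isolated vertices and $b_{tR}(G)<\infty$, and let $B$ be a $b_{tR}(G)$-set. Then $\gamma_{tR}(G)+1\le \gamma_{tR}(G-B)\le \gamma_{tR}(G)+2$. Both bounds are sharp: the upper bound is attained by the bistars $S_{p,q}$ with $q\ge p\ge 2$, and the lower bound by $S_{1,q}$ with $q\ge2$.
   Context: A TRDF on $G=(V,E)$ is a function $f:V\to\{0,1,2\}$ such that every $v$ with $f(v)=0$ has a neighbor $u$ with $f(u)=2$ and the subgraph induced by $\{v:f(v)>0\}$ has no isolated vertices; $\gamma_{tR}(G)$ is the minimum weight $\sum_v f(v)$ of a TRDF. $b_{tR}(G)$ is the minimum $|E'|$, $E'\subseteq E(G)$, such that $G-E'$ has no isolated vertices and $\gamma_{tR}(G-E')>\gamma_{tR}(G)$ ($\infty$ if none). A $b_{tR}(G)$-set is an edge set $B$ with $|B|=b_{tR}(G)$, $G-B$ without isolated vertices, and $\gamma_{tR}(G-B)>\gamma_{tR}(G)$. The bistar $S_{r,s}$ is the tree of diameter 3 whose two central vertices are adjacent to $r$ and $s$ leaves respectively. *)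

(* Defs.v *)
From mathcomp Require Import all_boot.
Set Implicit Arguments. Unset Strict Implicit. Unset Printing Implicit Defensive.

Section Graphs.
Variable V : finType.

Definition simple_graph (e : rel V) : Prop := symmetric e /\ irreflexive e.

Definition no_isolated (e : rel V) : bool := [forall v, [exists u, e v u]].

Definition edges (e : rel V) : {set {set V}} :=
  [set s : {set V} | [exists x, [exists y, e x y && (s == [set x; y])]]].

Definition del_edges (e : rel V) (B : {set {set V}}) : rel V :=
  fun x y => e x y && ([set x; y] \notin B).

Definition isTRDF (e : rel V) (f : {ffun V -> 'I_3}) : bool :=
  [forall v, ((f v : nat) == 0) ==> [exists u, e v u && ((f u : nat) == 2)]] &&
  [forall v, (0 < f v) ==> [exists u, e v u && (0 < f u)]].

Definition weight (f : {ffun V -> 'I_3}) : nat := \sum_(v : V) (f v : nat).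

(* gamma_tR: minimum weight of a TRDF (the default 2|V| is never below
   the weight of a TRDF, and a TRDF exists whenever there are no isolated
   vertices, e.g. the constant 2). *)
Definition gammatR (e : rel V) : nat :=
  \big[minn/(2 * #|V|)]_(f : {ffun V -> 'I_3} | isTRDF e f) weight f.

Definition bondage_cand (e : rel V) (B : {set {set V}}) : bool :=
  [&& B \subset edges e, no_isolated (del_edges e B)
    & gammatR e < gammatR (del_edges e B)].

(* b_tR(G) : None encodes infinity *)
Definition btR (e : rel V) : option nat :=
  if [exists B, bondage_cand e B] then
    Some (\big[minn/#|{set {set V}}|]_(B | bondage_cand e B) #|B|)
  else None.

Definition btR_set (e : rel V) (B : {set {set V}}) : bool :=
  bondage_cand e B && (btR e == Some #|B|).

End Graphs.

(* Bistar S_{p,q} on vertices 0..p+q+1 : centers 0 and 1; leaves 2..p+1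
   attached to 0, leaves p+2..p+q+1 attached to 1. *)
Definition bistar_base (p q : nat) (x y : 'I_(p + q).+2) : bool :=
  [|| ((x : nat) == 0) && ((y : nat) == 1),
      ((x : nat) == 0) && (2 <= y < p + 2)
    | ((x : nat) == 1) && (p + 2 <= y)].
Arguments bistar_base : clear implicits.

Definition bistar (p q : nat) : rel 'I_(p + q).+2 :=
  fun x y => bistar_base p q x y || bistar_base p q y x.
Arguments bistar : clear implicits.

(* Main.v *)
Require Import Defs.
From mathcomp Require Import all_boot.
From mathcomp Require Import zify.
From Stdlib Require Import FunctionalExtensionality.
Set Implicit Arguments. Unset Strict Implicit. Unset Printing Implicit Defensive.

Lemma bigmin_le_seq (I : eqType) (r : seq I) (P : pred I) (F : I -> nat) x0 j :
  j \in r -> P j -> \big[minn/x0]_(i <- r | P i) F i <= F j.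
Proof.
elim: r => [//|a r IH]; rewrite inE big_cons => /orP[/eqP->|Hj] Pj.
- by rewrite Pj geq_minl.
- case: (P a); last exact: IH.
  by rewrite (leq_trans (geq_minr _ _)) ?IH.
Qed.

Lemma bigmin_le (I : finType) (P : pred I) (F : I -> nat) x0 j :
  P j -> \big[minn/x0]_(i | P i) F i <= F j.
Proof. by move=> Pj; apply: bigmin_le_seq => //; rewrite mem_index_enum. Qed.

Lemma bigmin_ge (I : finType) (P : pred I) (F : I -> nat) x0 k :
  k <= x0 -> (forall i, P i -> k <= F i) -> k <= \big[minn/x0]_(i | P i) F i.
Proof. move=> H0 H. elim/big_ind: _ => // a b Ha Hb; by rewrite leq_min Ha Hb. Qed.

Lemma bigmin_arg (I : finType) (P : pred I) (F : I -> nat) x0 j :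
  P j -> (forall i, P i -> F i <= x0) ->
  exists i, P i /\ \big[minn/x0]_(i | P i) F i = F i.
Proof.
move=> Pj Hle.
have : (\big[minn/x0]_(i | P i) F i = x0) \/
       exists i, P i /\ \big[minn/x0]_(i | P i) F i = F i.
  elim/big_ind: _ => [|a b Ha Hb|i Pi]; [by left| |by right; exists i].
  rewrite /minn; by case: ifP.
case=> [H|//]; exists j; split=> //.
apply/eqP; rewrite eqn_leq bigmin_le //=; by rewrite H Hle.
Qed.

Section Gen.
Variable V : finType.
Implicit Types (e : rel V) (f : {ffun V -> 'I_3}).

Lemma isTRDFP e f : isTRDF e f <->
  (forall v, (f v : nat) = 0 -> exists u, e v u /\ (f u : nat) = 2) /\
  (forall v, 0 < f v -> exists u, e v u /\ 0 < f u).
Proof.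
split.
- case/andP=> /forallP H1 /forallP H2; split=> v Hv.
  + move: (H1 v); rewrite Hv eqxx /= => /existsP[u /andP[Hu /eqP Hu2]]; by exists u.
  + move: (H2 v); rewrite Hv /= => /existsP[u /andP[Hu Hu2]]; by exists u.
- case=> H1 H2; apply/andP; split; apply/forallP=> v; apply/implyP.
  + move=> /eqP /H1 [u [Hu Hu2]]; apply/existsP; exists u; by rewrite Hu Hu2 eqxx.
  + move=> /H2 [u [Hu Hu2]]; apply/existsP; exists u; by rewrite Hu Hu2.
Qed.

Lemma weight_le f : weight f <= 2 * #|V|.
Proof.
rewrite /weight (@leq_trans (\sum_(v : V) 2)) //.
  by apply: leq_sum => v _; have := ltn_ord (f v); lia.
by rewrite sum_nat_const mulnC.
Qed.

Lemma gam_le e f : isTRDF e f -> gammatR e <= weight f.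
Proof. by move=> H; apply: bigmin_le. Qed.

Lemma gam_ge e k : k <= 2 * #|V| -> (forall f, isTRDF e f -> k <= weight f) ->
  k <= gammatR e.
Proof. by move=> H0 H; apply: bigmin_ge. Qed.

Lemma gam_arg e f0 : isTRDF e f0 -> exists f, isTRDF e f /\ gammatR e = weight f.
Proof. move=> H; apply: (bigmin_arg H) => f _; exact: weight_le. Qed.

Definition const2 : {ffun V -> 'I_3} := [ffun=> @Ordinal 3 2 isT].

Lemma const2_TRDF e : no_isolated e -> isTRDF e const2.
Proof.
move=> /forallP H; apply/isTRDFP; split=> v; rewrite ffunE //= => _.
have /existsP[u Hu] := H v; exists u; by rewrite ffunE.
Qed.

Lemma sum2_le (A : pred V) (F : V -> nat) x y : x != y -> A x -> A y ->
  F x + F y <= \sum_(v | A v) F v.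
Proof.
move=> xy Ax Ay. rewrite (bigD1 x) //= (bigD1 y) /=; last by rewrite Ay eq_sym xy.
by rewrite addnA leq_addr.
Qed.

Lemma sum3_le (A : pred V) (F : V -> nat) x y z : x != y -> x != z -> y != z ->
  A x -> A y -> A z -> F x + F y + F z <= \sum_(v | A v) F v.
Proof.
move=> xy xz yz Ax Ay Az. rewrite (bigD1 x) //= (bigD1 y) /=; last by rewrite Ay eq_sym xy.
rewrite (bigD1 z) /=; last by rewrite Az [z == y]eq_sym yz [z == x]eq_sym xz.
by rewrite !addnA leq_addr.
Qed.

Lemma side2 e f (A : pred V) c l : isTRDF e f -> A c -> A l -> l != c ->
  (forall u, e l u -> u = c) -> 2 <= \sum_(v | A v) f v.
Proof.
move=> /isTRDFP[H1 H2] Ac Al lc Hl.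
have S2 := @sum2_le A (fun v => (f v : nat)) _ _ lc Al Ac. simpl in S2.
suff: 2 <= f l + f c by lia.
case E: (f l : nat) => [|n].
- have [u [Hu Hu2]] := H1 l E. by rewrite -(Hl u Hu) Hu2.
- have [|u [Hu Hu2]] := H2 l; first by rewrite E. move: Hu2; rewrite (Hl u Hu). lia.
Qed.

Lemma side3 e f (A : pred V) c l1 l2 : isTRDF e f -> A c -> A l1 -> A l2 ->
  l1 != c -> l2 != c -> l1 != l2 ->
  (forall u, e l1 u -> u = c) -> (forall u, e l2 u -> u = c) ->
  (forall u, e c u -> A u /\ u != c) -> 3 <= \sum_(v | A v) f v.
Proof.
move=> Hf Ac A1 A2 n1 n2 n12 L1 L2 Hc. have /isTRDFP[H1 H2] := Hf.
have Hleaf : forall l, (forall u, e l u -> u = c) ->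
    ((f l:nat) = 0 -> (f c:nat) = 2) /\ (0 < f l -> 0 < f c).
  move=> l Hl; split=> h.
  + by have [u [Hu Hu2]] := H1 l h; rewrite -(Hl u Hu).
  + by have [u [Hu Hu2]] := H2 l h; rewrite -(Hl u Hu).
have [a1 b1] := Hleaf l1 L1. have [a2 b2] := Hleaf l2 L2.
have n1' : c != l1 by rewrite eq_sym. have n2' : c != l2 by rewrite eq_sym.
have S3 := @sum3_le A (fun v => (f v : nat)) _ _ _ n1' n2' n12 Ac A1 A2.
have fc3 := ltn_ord (f c).
case: (ltnP (f c) 2) => hc.
- apply: (leq_trans _ S3) => /=. lia.
- have [|u [Hu pu]] := H2 c; first by lia.
  have [Au nu] := Hc u Hu.
  have S2 := @sum2_le A (fun v => (f v : nat)) _ _ nu Au Ac. simpl in S2. lia.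
Qed.

Definition raise f (S : {set V}) : {ffun V -> 'I_3} :=
  [ffun v => if v \in S then (if (f v : nat) == 0 then @Ordinal 3 1 isT else f v) else f v].

Lemma raiseE f (S : {set V}) v : (raise f S v : nat) =
  if v \in S then (if (f v : nat) == 0 then 1 else f v) else f v.
Proof. rewrite ffunE; case: (v \in S) => //; by case: ((f v : nat) == 0). Qed.

Lemma raise_pos f (S : {set V}) u : 0 < f u \/ u \in S -> 0 < raise f S u.
Proof. rewrite raiseE; case: (u \in S); case: (f u : nat) => //= *; lia. Qed.

Lemma weight_raise f (S : {set V}) : weight (raise f S) <= weight f + #|S|.
Proof.
rewrite /weight -sum1_card (big_mkcond (fun v => v \in S)) /= -big_split /=.
apply: leq_sum => v _; rewrite raiseE; case: (v \in S); case: (f v : nat) => //= *; lia.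
Qed.

Lemma repair e1 e2 f (S : {set V}) :
  isTRDF e1 f ->
  (forall v, v \in S -> exists u, e2 v u /\ (0 < f u \/ u \in S)) ->
  (forall v u, (f v:nat) = 0 -> v \notin S -> (f u:nat) = 2 -> e1 v u -> e2 v u) ->
  (forall v u, 0 < f v -> v \notin S -> 0 < f u -> e1 v u -> ~~ e2 v u ->
     exists w, e2 v w /\ (0 < f w \/ w \in S)) ->
  isTRDF e2 (raise f S).
Proof.
move=> /isTRDFP[H1 H2] S1 S2 S3; apply/isTRDFP; split=> v.
- rewrite raiseE; case: ifP => vS.
  + case: eqP => [//|ne h]; by case: ne.
  + move=> h0; have [u [Hu Hu2]] := H1 v h0; exists u; split.
      by apply: S2 => //; rewrite vS.
    by rewrite raiseE Hu2; case: (_ \in _).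
- rewrite raiseE; case: ifP => vS h.
  + have [u [Hu Hu2]] := S1 v vS; exists u; split => //; exact: raise_pos.
  + have [u [Hu Hu2]] := H2 v h.
    case E: (e2 v u); first by exists u; split => //; apply: raise_pos; left.
    have [w [Hw Hw2]] := S3 v u h (negbT vS) Hu2 Hu (negbT E).
    exists w; split => //; exact: raise_pos.
Qed.

Lemma del_set0 e : del_edges e set0 = e.
Proof.
apply: functional_extensionality => v; apply: functional_extensionality => u.
by rewrite /del_edges in_set0 andbT.
Qed.

Lemma cand_nonempty e B : bondage_cand e B -> B != set0.
Proof.
case/and3P=> _ _ H; apply/eqP => E; move: H; by rewrite E del_set0 ltnn.
Qed.

End Gen.


Lemma part1 (V : finType) (e : rel V) (B : {set {set V}}) :
  simple_graph e -> no_isolated e -> btR e <> None -> btR_set e B ->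
  gammatR e + 1 <= gammatR (del_edges e B) <= gammatR e + 2.
Proof.
move=> [esym eirr] _ _ /andP[HB /eqP Hb].
have hex : [exists B, bondage_cand e B] by apply/existsP; exists B.
move: Hb; rewrite /btR hex => -[Hm].
have HB' := HB. case/and3P: HB' => Bsub niso glt.
rewrite addn1 glt /=.
have /set0Pn [s sB] := cand_nonempty HB.
have := subsetP Bsub s sB; rewrite inE => /existsP[x /existsP[y /andP[exy /eqP Es]]].
set B' := B :\ s.
set e1 := del_edges e B'.
set e2 := del_edges e B.
have e21 : forall v u, e2 v u -> e1 v u.
  move=> v u; rewrite /e2 /e1 /del_edges in_setD1 => /andP[-> H]; by rewrite negb_and H orbT.
have e2sym : forall v u, e2 v u -> e2 u v.
  by move=> v u; rewrite /e2 /del_edges (esym v u) setUC.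
have Hdiff : forall v u, e1 v u -> ~~ e2 v u -> (v = x /\ u = y) \/ (v = y /\ u = x).
  move=> v u; rewrite /e1 /e2 /del_edges in_setD1 => /andP[evu H1].
  rewrite evu /= negbK => H2.
  move: H1; rewrite H2 andbT negbK Es => /eqP E.
  have vin : v \in [set x; y] by rewrite -E set21.
  have uin : u \in [set x; y] by rewrite -E set22.
  have vu : v != u by apply/eqP => vu; move: evu; rewrite vu eirr.
  move: vin uin vu; rewrite !in_set2 => /orP[]/eqP-> /orP[]/eqP->; rewrite ?eqxx //; auto.
have /forallP niso2 := niso.
have /existsP[x' ex'] := niso2 x. have /existsP[y' ey'] := niso2 y.
have niso1 : no_isolated e1.
  apply/forallP => v; have /existsP[u hu] := niso2 v; apply/existsP; exists u; exact: e21.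
have g1 : gammatR e1 <= gammatR e.
  rewrite leqNgt; apply/negP => H.
  have cand : bondage_cand e B'.
    by rewrite /bondage_cand (subset_trans (subsetDl B [set s]) Bsub) niso1 H.
  have := @bigmin_le _ (bondage_cand e) (fun B0 => #|B0|) #|{set {set V}}| B' cand.
  rewrite Hm (cardsD1 s B) sB /=. rewrite /B'. lia.
have [f [Hf wf]] := gam_arg (const2_TRDF niso1).
have [S [S1 [S2 [S3 Sc]]]] : exists S : {set V},
  (forall v, v \in S -> exists u, e2 v u /\ (0 < f u \/ u \in S)) /\
  (forall v u, (f v:nat) = 0 -> v \notin S -> (f u:nat) = 2 -> e1 v u -> e2 v u) /\
  (forall v u, 0 < f v -> v \notin S -> 0 < f u -> e1 v u -> ~~ e2 v u ->
     exists w, e2 v w /\ (0 < f w \/ w \in S)) /\ #|S| <= 2.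
  case: (boolP (((f x : nat) == 0) && ((f y : nat) == 2))) => [/andP[/eqP hx /eqP hy]|nA].
  { exists [set x; x']; split; [|split; [|split]].
    - move=> v; rewrite in_set2 => /orP[]/eqP->.
      + exists x'; split; [exact: ex'|right; exact: set22].
      + exists x; split; [exact: e2sym| right; exact: set21].
    - move=> v u hv vS hu evu; apply/negPn/negP => N; move: hv vS hu.
      case: (Hdiff v u evu N) => [[-> ->]|[-> ->]]; [by rewrite set21|move=> a b c; clear -a c hx hy; lia].
    - move=> v u hv vS hu evu N; move: hv vS hu.
      case: (Hdiff v u evu N) => [[-> ->]|[-> ->]]; move=> a b c; clear -a c hx hy; lia.
    - by rewrite cards2; case: (_ != _). }
  case: (boolP (((f y : nat) == 0) && ((f x : nat) == 2))) => [/andP[/eqP hy /eqP hx]|nB].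
  { exists [set y; y']; split; [|split; [|split]].
    - move=> v; rewrite in_set2 => /orP[]/eqP->.
      + exists y'; split; [exact: ey'|right; exact: set22].
      + exists y; split; [exact: e2sym| right; exact: set21].
    - move=> v u hv vS hu evu; apply/negPn/negP => N; move: hv vS hu.
      case: (Hdiff v u evu N) => [[-> ->]|[-> ->]]; [move=> a b c; clear -a c hx hy; lia|by rewrite set21].
    - move=> v u hv vS hu evu N; move: hv vS hu.
      case: (Hdiff v u evu N) => [[-> ->]|[-> ->]]; move=> a b c; clear -a c hx hy; lia.
    - by rewrite cards2; case: (_ != _). }
  case: (boolP ((0 < f x) && (0 < f y))) => [/andP[hx hy]|nC].
  { exists [set x'; y']; split; [|split; [|split]].
    - move=> v; rewrite in_set2 => /orP[]/eqP->.
      + exists x; split; [exact: e2sym| left; done].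
      + exists y; split; [exact: e2sym| left; done].
    - move=> v u hv vS hu evu; apply/negPn/negP => N; move: hv vS hu.
      case: (Hdiff v u evu N) => [[-> ->]|[-> ->]]; move=> a b c; clear -a c hx hy; lia.
    - move=> v u hv vS hu evu N; move: hv vS hu.
      case: (Hdiff v u evu N) => [[-> ->]|[-> ->]] _ _ _.
      + exists x'; split; [exact: ex'|right; exact: set21].
      + exists y'; split; [exact: ey'|right; exact: set22].
    - by rewrite cards2; case: (_ != _). }
  exists set0; split; [|split; [|split]].
  - by move=> v; rewrite in_set0.
  - move=> v u hv vS hu evu; apply/negPn/negP => N; move: hv vS hu.
    case: (Hdiff v u evu N) => [[-> ->]|[-> ->]]; move=> a b c; clear -a c nA nB nC; lia.
  - move=> v u hv vS hu evu N; move: hv vS hu.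
    case: (Hdiff v u evu N) => [[-> ->]|[-> ->]]; move=> a b c; clear -a c nA nB nC; lia.
  - by rewrite cards0.
have Hg := repair Hf S1 S2 S3.
have := gam_le Hg. have := weight_raise f S. move=> h1 h2; clear -h1 h2 wf g1 Sc; lia.
Qed.


Lemma sum_pt n k : \sum_(v < n) (((v : nat) == k) : nat) = (k < n).
Proof.
rewrite -(big_mkord xpredT (fun v => ((v == k) : nat))).
elim: n => [|n IH]; first by rewrite big_geq.
rewrite big_nat_recr //= IH. lia.
Qed.

Lemma sum_ptc n c k : \sum_(v < n) (c * ((v : nat) == k)) = c * (k < n).
Proof.
elim: n => [|n IH]; first by rewrite big_ord0 muln0.
rewrite big_ord_recr /= IH. lia.
Qed.

Section Bistar.
Variables p q : nat.
Hypothesis hp : 1 <= p.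
Hypothesis hq : 2 <= q.
Local Notation W := 'I_(p + q).+2.

Definition vx (k : nat) : W := inord k.
Lemma vxE k : k < (p+q).+2 -> (vx k : nat) = k. Proof. exact: inordK. Qed.
Lemma hv0 : (vx 0 : nat) = 0. Proof. by rewrite vxE. Qed.
Lemma hv1 : (vx 1 : nat) = 1. Proof. by rewrite vxE. Qed.
Lemma hv2 : (vx 2 : nat) = 2. Proof. rewrite vxE //; lia. Qed.
Lemma hv3 : (vx 3 : nat) = 3. Proof. rewrite vxE //; lia. Qed.
Lemma hvp2 : (vx (p+2) : nat) = p+2. Proof. rewrite vxE //; lia. Qed.
Lemma hvp3 : (vx (p+3) : nat) = p+3. Proof. rewrite vxE //; lia. Qed.

Ltac vlia := move: (hv0) (hv1) (hv2) (hv3) (hvp2) (hvp3) (hp) (hq); lia.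

Definition B0 : {set {set W}} := [set [set vx 0; vx 1]].

Lemma delE (x y : W) :
  del_edges (bistar p q) B0 x y = bistar p q x y && ((1 < x) || (1 < y)).
Proof.
rewrite /del_edges in_set1.
case: (boolP ((1 < x) || (1 < y))) => H.
- rewrite andbT; case: (bistar p q x y) => //=. apply/eqP => E.
  case/orP: H => H.
  + have : x \in [set vx 0; vx 1] by rewrite -E set21.
    rewrite in_set2 -!val_eqE /= => /orP[]/eqP; move: H; vlia.
  + have : y \in [set vx 0; vx 1] by rewrite -E set22.
    rewrite in_set2 -!val_eqE /= => /orP[]/eqP; move: H; vlia.
- rewrite andbF; case E1: (bistar p q x y) => //=. apply: negbF; apply/eqP.
  have : ((x:nat) == 0) && ((y:nat) == 1) || ((x:nat) == 1) && ((y:nat) == 0).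
    move: E1 H; rewrite /bistar /bistar_base; lia.
  case/orP=> /andP[/eqP hx /eqP hy].
  + have -> : x = vx 0 by apply: val_inj; rewrite /= hv0.
    have -> : y = vx 1 by apply: val_inj; rewrite /= hv1.
    done.
  + have -> : x = vx 1 by apply: val_inj; rewrite /= hv1.
    have -> : y = vx 0 by apply: val_inj; rewrite /= hv0.
    by rewrite setUC.
Qed.

Definition sideA (v : W) : bool := ((v:nat) < p+2) && ((v:nat) != 1).

Lemma wsplit (f : {ffun W -> 'I_3}) :
  weight f = \sum_(v | sideA v) f v + \sum_(v | ~~ sideA v) f v.
Proof. exact: bigID. Qed.

Lemma card2W : 6 <= 2 * #|W|.
Proof. rewrite card_ord; lia. Qed.

Lemma neqv (a b : nat) : a < (p+q).+2 -> b < (p+q).+2 -> a != b -> vx a != vx b.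
Proof. move=> ha hb ab; by rewrite -val_eqE /= !vxE. Qed.

Lemma gb_low : 4 <= gammatR (bistar p q).
Proof.
apply: gam_ge; first exact: (leq_trans _ card2W).
move=> f Hf; rewrite wsplit.
have h1 : 2 <= \sum_(v | sideA v) f v.
  apply: (side2 (c := vx 0) (l := vx 2) Hf).
  - rewrite /sideA; vlia.
  - rewrite /sideA; vlia.
  - apply: neqv => //; lia.
  - move=> u; rewrite /bistar /bistar_base => H; apply: val_inj => /=.
    move: H; have := ltn_ord u; vlia.
have h2 : 2 <= \sum_(v | ~~ sideA v) f v.
  apply: (side2 (A := fun v => ~~ sideA v) (c := vx 1) (l := vx (p+2)) Hf).
  - rewrite /sideA; vlia.
  - rewrite /sideA; vlia.
  - apply: neqv => //; lia.
  - move=> u; rewrite /bistar /bistar_base => H; apply: val_inj => /=.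
    move: H; have := ltn_ord u; vlia.
exact: (leq_add h1 h2).
Qed.

Lemma gd_low_right (f : {ffun W -> 'I_3}) : isTRDF (del_edges (bistar p q) B0) f ->
  3 <= \sum_(v | ~~ sideA v) f v.
Proof.
move=> Hf.
apply: (side3 (A := fun v => ~~ sideA v) (c := vx 1) (l1 := vx (p+2)) (l2 := vx (p+3)) Hf).
- rewrite /sideA; vlia.
- rewrite /sideA; vlia.
- rewrite /sideA; vlia.
- apply: neqv => //; lia.
- apply: neqv => //; lia.
- apply: neqv => //; lia.
- move=> u; rewrite delE /bistar /bistar_base => H; apply: val_inj => /=.
  move: H; have := ltn_ord u; vlia.
- move=> u; rewrite delE /bistar /bistar_base => H; apply: val_inj => /=.
  move: H; have := ltn_ord u; vlia.
- move=> u; rewrite delE /bistar /bistar_base /sideA -val_eqE /= => H.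
  split; move: H; have := ltn_ord u; vlia.
Qed.

Lemma gd_low (hp2 : 2 <= p) : 6 <= gammatR (del_edges (bistar p q) B0).
Proof.
apply: gam_ge; first exact: card2W.
move=> f Hf; rewrite wsplit.
have h2 := gd_low_right Hf.
have h1 : 3 <= \sum_(v | sideA v) f v.
  apply: (side3 (c := vx 0) (l1 := vx 2) (l2 := vx 3) Hf).
  - rewrite /sideA; vlia.
  - rewrite /sideA; vlia.
  - rewrite /sideA; move: hp2; vlia.
  - apply: neqv => //; lia.
  - apply: neqv => //; lia.
  - apply: neqv => //; lia.
  - move=> u; rewrite delE /bistar /bistar_base => H; apply: val_inj => /=.
    move: H; have := ltn_ord u; vlia.
  - move=> u; rewrite delE /bistar /bistar_base => H; apply: val_inj => /=.
    move: H hp2; have := ltn_ord u; vlia.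
  - move=> u; rewrite delE /bistar /bistar_base /sideA -val_eqE /= => H.
    split; move: H; have := ltn_ord u; vlia.
exact: (leq_add h1 h2).
Qed.

Lemma gd_low1 : 5 <= gammatR (del_edges (bistar p q) B0).
Proof.
apply: gam_ge; first exact: (leq_trans _ card2W).
move=> f Hf; rewrite wsplit.
have h2 := gd_low_right Hf.
have h1 : 2 <= \sum_(v | sideA v) f v.
  apply: (side2 (c := vx 0) (l := vx 2) Hf).
  - rewrite /sideA; vlia.
  - rewrite /sideA; vlia.
  - apply: neqv => //; lia.
  - move=> u; rewrite delE /bistar /bistar_base => H; apply: val_inj => /=.
    move: H; have := ltn_ord u; vlia.
exact: (leq_add h1 h2).
Qed.

Definition wit (g : nat -> nat) : {ffun W -> 'I_3} := [ffun v : W => inord (g (v : nat))].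
Lemma witE g (Hg : forall n, g n < 3) v : (wit g v : nat) = g v.
Proof. by rewrite ffunE inordK. Qed.

Lemma weight_wit g (Hg : forall n, g n < 3) : weight (wit g) = \sum_(v : W) g v.
Proof. apply: eq_bigr => v _; exact: witE. Qed.

Definition g4 (n : nat) : nat := 2 * (n == 0) + 2 * (n == 1).
Lemma g4_lt n : g4 n < 3. Proof. rewrite /g4; lia. Qed.
Lemma weight4 : weight (wit g4) = 4.
Proof.
rewrite weight_wit; last exact: g4_lt.
rewrite /g4 big_split /=. have E1 := sum_ptc (p+q).+2 2 0. have E2 := sum_ptc (p+q).+2 2 1. simpl in E1, E2. rewrite E1 E2. lia.
Qed.

Lemma trdf4 : isTRDF (bistar p q) (wit g4).
Proof.
apply/isTRDFP; split=> v; rewrite (witE g4_lt) /g4 => h.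
- case: (ltnP v (p+2)) => hv; [exists (vx 0)|exists (vx 1)];
  rewrite (witE g4_lt) /g4 /bistar /bistar_base; split; move: h hv; have := ltn_ord v; vlia.
- have : ((v:nat) == 0) || ((v:nat) == 1) by move: h; lia.
  case/orP => hv; [exists (vx 1)|exists (vx 0)];
  rewrite (witE g4_lt) /g4 /bistar /bistar_base; split; move: hv; vlia.
Qed.

Lemma gb4 : gammatR (bistar p q) = 4.
Proof.
apply/eqP; rewrite eqn_leq gb_low andbT.
by have := gam_le trdf4; rewrite weight4.
Qed.

Definition g6 (n : nat) : nat := 2 * (n == 0) + 2 * (n == 1) + (n == 2) + (n == p + 2).
Lemma g6_lt n : g6 n < 3. Proof. rewrite /g6; move: hp; lia. Qed.
Lemma weight6 : weight (wit g6) = 6.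
Proof.
rewrite weight_wit; last exact: g6_lt.
rewrite /g6 big_split big_split big_split /=.
have E1 := sum_ptc (p+q).+2 2 0. have E2 := sum_ptc (p+q).+2 2 1.
have E3 := sum_pt (p+q).+2 2. have E4 := sum_pt (p+q).+2 (p+2).
simpl in E1, E2, E3, E4. rewrite E1 E2 E3 E4. move: hp hq; lia.
Qed.

Lemma trdf6 : isTRDF (del_edges (bistar p q) B0) (wit g6).
Proof.
apply/isTRDFP; split=> v; rewrite (witE g6_lt) /g6 => h.
- case: (ltnP v (p+2)) => hv; [exists (vx 0)|exists (vx 1)];
  rewrite (witE g6_lt) /g6 delE /bistar /bistar_base; split; move: h hv; have := ltn_ord v; vlia.
- have : [|| (v:nat) == 0, (v:nat) == 1, (v:nat) == 2 | (v:nat) == p+2] by move: h; lia.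
  case/or4P => hv; [exists (vx 2)|exists (vx (p+2))|exists (vx 0)|exists (vx 1)];
  rewrite (witE g6_lt) /g6 delE /bistar /bistar_base; split; move: hv; vlia.
Qed.

Definition g5 (n : nat) : nat := (n == 0) + 2 * (n == 1) + (n == 2) + (n == 3).
Lemma g5_lt n : g5 n < 3. Proof. rewrite /g5; lia. Qed.
Lemma weight5 : weight (wit g5) = 5.
Proof.
rewrite weight_wit; last exact: g5_lt.
rewrite /g5 big_split big_split big_split /=.
have E1 := sum_pt (p+q).+2 0. have E2 := sum_ptc (p+q).+2 2 1.
have E3 := sum_pt (p+q).+2 2. have E4 := sum_pt (p+q).+2 3.
simpl in E1, E2, E3, E4. rewrite E1 E2 E3 E4. move: hp hq; lia.
Qed.

Lemma trdf5 (p1 : p = 1) : isTRDF (del_edges (bistar p q) B0) (wit g5).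
Proof.
apply/isTRDFP; split=> v; rewrite (witE g5_lt) /g5 => h.
- exists (vx 1);
  rewrite (witE g5_lt) /g5 delE /bistar /bistar_base; split; move: h p1; have := ltn_ord v; vlia.
- have : [|| (v:nat) == 0, (v:nat) == 1, (v:nat) == 2 | (v:nat) == 3] by move: h; lia.
  case/or4P => hv; [exists (vx 2)|exists (vx 3)|exists (vx 0)|exists (vx 1)];
  rewrite (witE g5_lt) /g5 delE /bistar /bistar_base; split; move: hv p1; vlia.
Qed.

Lemma B0_sub : B0 \subset edges (bistar p q).
Proof.
rewrite sub1set inE; apply/existsP; exists (vx 0); apply/existsP; exists (vx 1).
rewrite eqxx andbT /bistar /bistar_base; vlia.
Qed.

Lemma noiso_del : no_isolated (del_edges (bistar p q) B0).
Proof.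
apply/forallP => v; apply/existsP.
have hvn := ltn_ord v.
case: (ltnP v 2) => h2.
- case: (ltnP v 1) => h1.
  + exists (vx 2); rewrite delE /bistar /bistar_base; move: h1 hvn; vlia.
  + exists (vx (p+2)); rewrite delE /bistar /bistar_base; move: h1 h2 hvn; vlia.
- case: (ltnP v (p+2)) => h3; [exists (vx 0)|exists (vx 1)];
  rewrite delE /bistar /bistar_base; move: h2 h3 hvn; vlia.
Qed.

Lemma btR_B0 (Hlt : gammatR (bistar p q) < gammatR (del_edges (bistar p q) B0)) :
  btR_set (bistar p q) B0.
Proof.
have cand : bondage_cand (bistar p q) B0 by rewrite /bondage_cand B0_sub noiso_del Hlt.
rewrite /btR_set cand /btR.
have -> : [exists B, bondage_cand (bistar p q) B] by apply/existsP; exists B0.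
rewrite cards1; apply/eqP; congr Some; apply/anti_leq/andP; split.
- have := @bigmin_le _ (bondage_cand (bistar p q)) (fun B => #|B|) #|{set {set W}}| B0 cand.
  by rewrite cards1.
- apply: bigmin_ge.
  + apply/card_gt0P; by exists B0.
  + move=> B HB; rewrite card_gt0; exact: cand_nonempty HB.
Qed.

End Bistar.


Theorem mainTheorem4 :
  (forall (V : finType) (e : rel V) (B : {set {set V}}),
     simple_graph e -> no_isolated e -> btR e <> None -> btR_set e B ->
     gammatR e + 1 <= gammatR (del_edges e B) <= gammatR e + 2)
  /\ (forall p q : nat, 2 <= p -> p <= q ->
       exists B, btR_set (bistar p q) B /\
         gammatR (del_edges (bistar p q) B) = gammatR (bistar p q) + 2)
  /\ (forall q : nat, 2 <= q ->
       exists B, btR_set (bistar 1 q) B /\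
         gammatR (del_edges (bistar 1 q) B) = gammatR (bistar 1 q) + 1).
Proof.
split; [|split].
- move=> V e B; exact: part1.
- move=> p q hp2 hpq.
  have hp : 1 <= p by lia.
  have hq : 2 <= q by lia.
  have E6 : gammatR (del_edges (bistar p q) (B0 p q)) = 6.
    apply/eqP; rewrite eqn_leq (gd_low hp hq hp2) andbT.
    by have := gam_le (trdf6 hp hq); rewrite (weight6 hp hq).
  exists (B0 p q); split; last by rewrite E6 (gb4 hp hq).
  apply: (btR_B0 hp hq); by rewrite E6 (gb4 hp hq).
- move=> q hq.
  have hp : 1 <= 1 by [].
  have E5 : gammatR (del_edges (bistar 1 q) (B0 1 q)) = 5.
    apply/eqP; rewrite eqn_leq (gd_low1 hp hq) andbT.
    by have := gam_le (trdf5 hp hq erefl); rewrite (weight5 hp hq).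
  exists (B0 1 q); split; last by rewrite E5 (gb4 hp hq).
  apply: (btR_B0 hp hq); by rewrite E5 (gb4 hp hq).
Qed.
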